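(* Let $G$ be a directed $st$-graph, let $T\neq\{s\}$ be a minimal vertex separator of $G$ and let $b\in T$. Then $T$ is $b$-minimal if and only if $(T\cup\mathrm{pred}(u))\setminus\{b\}\preceq b$ for every $u\in T$.
   Context: A directed $st$-graph $G=(V,E,s,t)$ is a finite directed graph with no self-loops and no parallel edges, with distinct source $s$ (no incoming edges) and sink $t$ (no outgoing edges), such that every vertex lies on some directed walk from $s$ to $t$. A vertex separator is a set $T\subseteq V$ meeting every $s$–$t$ walk; an mvs is an inclusion-minimal one. $\mathrm{pred}(u)=\{v\in V: (v,u)\in E\}$. For $A\subseteq V$, $u\in V$: $A\preceq u$ if every directed walk from $s$ to $u$ contains a vertex of $A$; $u\sqsubseteq A$ if every directed walk from $u$ to $t$ contains a vertex of $A$; $A\sqsubseteq A'$ if $u\sqsubseteq A'$ for all $u\in A$; $A\sqsubset A'$ means $A\sqsubseteq A'$, $A\ne A'$. An mvs $T$ is $b$-minimal if $b\in T$ and $b\notin T'$ for every mvs $T'\sqsubset T$. *)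

(* Defs.v *)
(* A directed st-graph on a finite vertex type V with edge
   relation E (a relation has no parallel edges by construction). *)
From mathcomp Require Import all_boot.
Set Implicit Arguments. Unset Strict Implicit. Unset Printing Implicit Defensive.

Section StGraph.
Variable V : finType.
Variable E : rel V.

(* A directed walk from x to y: vertex sequence x :: p, consecutive vertices
   joined by edges, ending at y.  Its vertex set is x :: p. *)
Definition walk (x y : V) (p : seq V) : bool := path E x p && (last x p == y).

Definition walk_meets (A : {set V}) (x : V) (p : seq V) : bool :=
  has (fun v => v \in A) (x :: p).

Definition st_graph (s t : V) : Prop :=
  [/\ s != t,
      (forall v, ~~ E v v),
      (forall v, ~~ E v s),
      (forall v, ~~ E t v) &
      (forall u, exists p q, walk s u p /\ walk u t q)].

Definition vsep (s t : V) (T : {set V}) : Prop :=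
  forall p, walk s t p -> walk_meets T s p.

Definition mvs (s t : V) (T : {set V}) : Prop :=
  vsep s t T /\ (forall T' : {set V}, T' \subset T -> vsep s t T' -> T' = T).

Definition predv (u : V) : {set V} := [set v | E v u].

Definition prec (s : V) (A : {set V}) (u : V) : Prop :=
  forall p, walk s u p -> walk_meets A s p.

Definition sqle_v (t : V) (u : V) (A : {set V}) : Prop :=
  forall p, walk u t p -> walk_meets A u p.

Definition sqle (t : V) (A A' : {set V}) : Prop :=
  forall u, u \in A -> sqle_v t u A'.

Definition sqlt (t : V) (A A' : {set V}) : Prop := sqle t A A' /\ A <> A'.

Definition b_minimal (s t : V) (T : {set V}) (b : V) : Prop :=
  b \in T /\
  (forall T' : {set V}, mvs s t T' -> sqlt t T' T -> b \notin T').

End StGraph.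

(* Main.v *)
Require Import Defs.
From mathcomp Require Import all_boot.
From Stdlib Require Import Classical ClassicalDescription.

Set Implicit Arguments. Unset Strict Implicit. Unset Printing Implicit Defensive.

Definition dec (P : Prop) : bool := if excluded_middle_informative P then true else false.
Lemma decP (P : Prop) : dec P -> P.
Proof. by rewrite /dec; case: excluded_middle_informative. Qed.
Lemma decI (P : Prop) : P -> dec P.
Proof. by rewrite /dec; case: excluded_middle_informative. Qed.

Section Aux.
Variable V : finType.
Variable E : rel V.

Lemma walk_cat x y z p q : walk E x y p -> walk E y z q -> walk E x z (p ++ q).
Proof.
rewrite /walk => /andP[p1 /eqP l1] /andP[p2 l2].
by rewrite cat_path last_cat l1 p1 p2 l2.
Qed.

Lemma walk_split x z p1 y p2 :
  walk E x z (p1 ++ y :: p2) -> walk E x y (rcons p1 y) /\ walk E y z p2.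
Proof.
rewrite /walk cat_path last_cat /= => /andP[/andP[h1 /andP[h2 h3]] h4].
by rewrite rcons_path h1 h2 last_rcons eqxx h3 h4.
Qed.

Lemma walk_split_full x z p s1 y s2 :
  walk E x z p -> x :: p = s1 ++ y :: s2 ->
  (exists p1, walk E x y p1 /\ x :: p1 = rcons s1 y) /\ walk E y z s2.
Proof.
case: s1 => [|a s1] /= hw [].
  move=> e1 e2; subst. split; last by []. exists [::]. by rewrite /walk /= eqxx.
move=> e1 e2; subst.
case/walk_split: hw => h1 h2. split; last by []. by exists (rcons s1 y).
Qed.

Lemma split_first (a : pred V) s : has a s ->
  exists s1 y s2, s = s1 ++ y :: s2 /\ a y /\ ~~ has a s1.
Proof.
elim: s => //= x s IH.
case ax: (a x) => /=.
  by move=> _; exists [::], x, s.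
move=> /IH [s1 [y [s2 [-> [ay ns1]]]]].
by exists (x :: s1), y, s2; rewrite /= ax.
Qed.

Lemma split_last (a : pred V) s : has a s ->
  exists s1 y s2, s = s1 ++ y :: s2 /\ a y /\ ~~ has a s2.
Proof.
elim: s => //= x s IH.
case hs: (has a s).
  move=> _; case: (IH hs) => [s1 [y [s2 [-> [ay ns2]]]]].
  by exists (x :: s1), y, s2.
rewrite orbF => ax. by exists [::], x, s; rewrite hs.
Qed.

Lemma mvs_walk s t T v : mvs E s t T -> v \in T ->
  exists p, walk E s t p /\ ~~ walk_meets (T :\ v) s p.
Proof.
move=> [sepT minT] vT. apply: NNPP => hn.
have e : T :\ v = T.
  apply: minT; first exact: subsetDl.
  move=> q hq. apply: contraT => hq'. case: hn. by exists q.
by move: vT; rewrite -e !inE eqxx.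
Qed.

Lemma mvs_wit s t T v : mvs E s t T -> v \in T ->
  exists q, walk E v t q /\ ~~ has (fun w => w \in T) q.
Proof.
move=> hT vT. have [p [hw hm]] := mvs_walk hT vT.
have := hT.1 p hw. rewrite /walk_meets => hT1.
case: (split_last hT1) => s1 [y [s2 [eqs [yT ns2]]]].
have yv : y = v.
  case: (y =P v) => // /eqP hyv; exfalso. move/negP: hm; apply.
  apply/hasP; exists y; first by rewrite eqs mem_cat in_cons eqxx orbT.
  by rewrite !inE hyv yT.
subst y. case: (walk_split_full hw eqs) => _ h. by exists s2.
Qed.

Lemma noescape s t T T' x p q : vsep E s t T' -> sqle E t T' T -> walk E s x p ->
  ~~ walk_meets T' s p -> walk E x t q -> ~~ has (fun w => w \in T) q -> False.
Proof.
move=> sep le wp np wq nq. move: np; rewrite /walk_meets => np.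
have := sep _ (walk_cat wp wq). rewrite /walk_meets -cat_cons has_cat (negbTE np) /= => hq.
case: (split_first hq) => q1 [y [q2 [eq [yT' _]]]].
rewrite eq in wq. case: (walk_split wq) => _ wy.
have := le _ yT' _ wy. rewrite /walk_meets => hy.
move/negP: nq; apply. by rewrite eq has_cat hy orbT.
Qed.

Lemma sep_s_T s t T : mvs E s t T -> s \in T -> T = [set s].
Proof.
move=> [_ minT] sT. symmetry. apply: minT; first by rewrite sub1set.
move=> p _. by rewrite /walk_meets /= inE eqxx.
Qed.

Lemma exists_mvs s t n (S : {set V}) : #|S| <= n -> vsep E s t S ->
  exists T' : {set V}, T' \subset S /\ mvs E s t T'.
Proof.
elim: n S => [|n IH] S hn hS;
 (case: (classic (forall T' : {set V}, T' \subset S -> vsep E s t T' -> T' = S)) => hmin;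
   [by exists S; split; [exact: subxx | split]|]);
 (have [T' [sub [sep neq]]] : exists T' : {set V}, T' \subset S /\ vsep E s t T' /\ T' <> S
   by (apply: NNPP => hn2; apply: hmin => T' h1 h2; apply: NNPP => h3; apply: hn2;
       exists T'; split));
 have pr : T' \proper S by rewrite properEneq sub andbT; apply/eqP.
- by have := proper_card pr; rewrite ltnNge (leq_trans hn (leq0n _)).
- have := proper_card pr => lt.
  have [T'' [s1 m]] := IH T' (leq_trans (ltnSE (leq_trans lt hn)) (leqnn _)) sep.
  exists T''; split => //. exact: subset_trans s1 sub.
Qed.

End Aux.

Theorem theorem4 (V : finType) (E : rel V) (s t : V)
  (hG : st_graph E s t) (T : {set V}) (hT : mvs E s t T)
  (hTs : T <> [set s]) (b : V) (hb : b \in T) :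
  b_minimal E s t T b <->
  (forall u, u \in T -> prec E s ((T :|: predv E u) :\ b) b).
Proof.
have sT : s \notin T.
  apply/negP => hs. by apply: hTs; apply: (sep_s_T hT hs).
have [sepT minT] := hT.
case: hG => _ noloop _ _ _.
split.
- move=> [_ bmin] u uT p hp.
  apply: contraT => hn.
  pose X := [set x | E x u && dec (sqle_v E t x T)].
  pose S := (T :\ u) :|: X.
  have sepS : vsep E s t S.
    move=> q hq. have := sepT q hq. rewrite /walk_meets => hT1.
    case: (split_first hT1) => s1 [z [s2 [eq [zT ns1]]]].
    case: (z =P u) => [zu|zu]; last first.
      apply/hasP; exists z; first by rewrite eq mem_cat in_cons eqxx orbT.
      by rewrite /S in_setU in_setD1 zT andbT; apply/orP; left; apply/eqP.
    subst z.
    move: eq ns1; case/lastP: s1 => [|s1 x] eq ns1.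
      move: eq => /= [su _]. by rewrite su uT in sT.
    rewrite cat_rcons in eq.
    case: (walk_split_full hq eq) => [[p2 [wp2 e2]] wx].
    case/andP: wx => /= /andP[exu _] _.
    change (has (fun w => w \in S) (s :: q)); apply/hasP; exists x; first by rewrite eq mem_cat in_cons eqxx orbT.
    rewrite /S /X in_setU inE exu /=; apply/orP; right; apply: decI.
    move=> r wr. apply: contraT => nr.
    have := sepT _ (walk_cat wp2 wr).
    rewrite /walk_meets -cat_cons has_cat e2 (negbTE ns1) /= => hr.
    by move: nr; rewrite /walk_meets /= hr orbT.
  have [T' [subT' mT']] := exists_mvs (leqnn #|S|) sepS.
  have leT' : sqle E t T' T.
    move=> x xT' r wr. have := subsetP subT' x xT'.
    rewrite /S in_setU in_setD1 => /orP[/andP[_ xT]|xX].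
      by rewrite /walk_meets /= xT.
    move: xX; rewrite /X inE => /andP[_ /decP]; apply. exact wr.
  have uS : u \notin S.
    by rewrite /S /X !inE eqxx /= (negbTE (noloop u)).
  have neq : T' <> T.
    move=> e. rewrite -e in uT. by move: uS; rewrite (subsetP subT' u uT).
  have bT' : b \in T'.
    apply: contraT => nb.
    have [r [wr nr]] := mvs_wit hT hb.
    have := (mT'.1) _ (walk_cat hp wr). rewrite /walk_meets -cat_cons has_cat => /orP[].
      move=> /hasP [y yin yT']. case/negP: hn. apply/hasP; exists y => //.
      have := subsetP subT' y yT'. rewrite /S /X /predv !inE.
      case: (y =P b) => [yb|/eqP yb]; first by rewrite -yb yT' in nb.
      case/orP => [/andP[_ ->]|/andP[-> _]] //; by rewrite orbT.
    move=> /hasP [y yin yT']. case/splitPr: yin wr nr => r1 r2 wr nr.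
    case: (walk_split wr) => _ wy.
    have := leT' y yT' r2 wy. rewrite /walk_meets => hy.
    by move: nr; rewrite has_cat hy orbT.
  have := bmin T' mT' (conj leT' neq). by rewrite bT'.
- move=> C. split => // T' mT' [leT' neq]. apply/negP => bT'.
  have [sepT' minT'] := mT'.
  have [u [uT uT']] : exists u, u \in T /\ u \notin T'.
    apply: NNPP => hn. apply: neq. symmetry. apply: minT'; last exact: sepT.
    apply/subsetP => x xT. apply: contraT => nx. case: hn; by exists x.
  have [p [hw hm]] := mvs_walk mT' bT'.
  have := sepT' p hw. rewrite /walk_meets => hT1.
  case: (split_first hT1) => s1 [y [s2 [eqs [yT ns1]]]].
  have yb : y = b.
    case: (y =P b) => // /eqP hyb; exfalso. move/negP: hm; apply.
    apply/hasP; exists y; first by rewrite eqs mem_cat in_cons eqxx orbT.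
    by rewrite !inE hyb yT.
  subst y.
  case: (walk_split_full hw eqs) => [[p1 [wp1 e1]] _].
  have ns1T : ~~ has (fun w => w \in T) s1.
    apply/negP => /split_first [a1 [v [a2 [e2 [vT na1]]]]].
    rewrite e2 rcons_cat /= in e1.
    case: (walk_split_full wp1 e1) => [[p2 [wp2 e3]] _].
    have [r [wr nr]] := mvs_wit hT vT.
    apply: (noescape sepT' leT' wp2 _ wr nr).
    move: ns1; rewrite e2 has_cat /= => /norP[na /norP[nv _]].
    by rewrite /walk_meets e3 has_rcons negb_or na nv.
  have := C u uT p1 wp1. rewrite /walk_meets e1 has_rcons !inE eqxx /= => hw1.
  case: (split_first hw1) => a1 [w [a2 [e2 [wS na1]]]].
  have wu : E w u.
    move: wS; rewrite /predv !inE => /andP[_ /orP[wT|//]].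
    by move: ns1T; rewrite e2 has_cat /= wT orbT.
  rewrite e2 rcons_cat /= in e1.
  case: (walk_split_full wp1 e1) => [[p2 [wp2 e3]] _].
  have wpu : walk E s u (p2 ++ [:: u]).
    apply: (walk_cat wp2). by rewrite /walk /= wu eqxx.
  have [r [wr nr]] := mvs_wit hT uT.
  apply: (noescape sepT' leT' wpu _ wr nr).
  move: ns1; rewrite e2 has_cat /= => /norP[na /norP[nw _]].
  rewrite /walk_meets -cat_cons e3 has_cat has_rcons /= !negb_or na nw.
  by rewrite (negbTE uT').
Qed.
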